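(* Let $N\in\mathbb{N}$, $J\in\{0,\dots,N\}$, $m,M\in(0,1)$ with $m\le M$, and $a_1,\dots,a_N\in[m,M]$. Define $f\colon[m,M]^N\to\mathbb{R}^+$ by \[ f(z_1,\dots,z_N)=\prod_{i=1}^{J}\Big(N+\frac{a_i}{z_i}\Big)\prod_{i=J+1}^{N}\Big(N+\frac{1-a_i}{1-z_i}\Big). \] Then $f$ is convex. Moreover, any function obtained from $f$ by recursively substituting variables $z_i$ by affine functions of the remaining free variables (on a convex domain mapped into $[m,M]^N$) is convex. *)

(* Defs.v *)
From HB Require Import structures.
From mathcomp Require Import all_boot all_order all_algebra.
From mathcomp Require Import reals.
Set Implicit Arguments. Unset Strict Implicit. Unset Printing Implicit Defensive.
Import Order.TTheory GRing.Theory Num.Theory.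
Local Open Scope ring_scope.

Section Defs.
Variable R : realType.

(* f(z) = prod_{i=1}^J (N + a_i/z_i) * prod_{i=J+1}^N (N + (1-a_i)/(1-z_i));
   with 0-based ordinals, i < J covers the paper's indices 1..J. *)
Definition fJ (N J : nat) (a : 'I_N -> R) (z : 'I_N -> R) : R :=
  \prod_(i < N) (if (i < J)%N then N%:R + a i / z i
                 else N%:R + (1 - a i) / (1 - z i)).

Definition in_box (N : nat) (m M : R) (z : 'I_N -> R) : Prop :=
  forall i, m <= z i <= M.

Definition convex_set (k : nat) (D : ('I_k -> R) -> Prop) : Prop :=
  forall x y (t : R), D x -> D y -> 0 <= t <= 1 ->
    D (fun i => t * x i + (1 - t) * y i).

Definition convex_on (k : nat) (D : ('I_k -> R) -> Prop)
    (g : ('I_k -> R) -> R) : Prop :=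
  forall x y (t : R), D x -> D y -> 0 <= t <= 1 ->
    g (fun i => t * x i + (1 - t) * y i) <= t * g x + (1 - t) * g y.

Definition affine_map (k N : nat) (A : ('I_k -> R) -> ('I_N -> R)) : Prop :=
  exists (c : 'I_N -> 'I_k -> R) (b : 'I_N -> R),
    forall x i, A x i = b i + \sum_(j < k) c i j * x j.
End Defs.

(* Main.v *)
Require Import Defs.
From HB Require Import structures.
From mathcomp Require Import all_boot all_order all_algebra.
From mathcomp Require Import reals.
From mathcomp Require Import interval_inference sequences exp.
From mathcomp Require convex.
From mathcomp Require Import ring lra.
From mathcomp Require Import boolp.
Import Order.TTheory GRing.Theory Num.Theory.
Local Open Scope ring_scope.

Lemma convE {R : realType} (t a b : R) : 0 <= t <= 1 ->
  expR (t * a + (1 - t) * b) <= t * expR a + (1 - t) * expR b.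
Proof.
move=> /andP[t0 t1].
have := @convex_expR R (Itv01 t0 t1) a b.
by rewrite !convex.convRE /=.
Qed.

Lemma factor_ineq (R : realType) (t n c w1 w2 : R) : 0 <= t <= 1 ->
  0 < n -> 0 < c -> 0 < w1 -> 0 < w2 ->
  n + c / (t * w1 + (1 - t) * w2) <=
  expR (t * ln (n + c / w1) + (1 - t) * ln (n + c / w2)).
Proof.
move=> ht n0 c0 w10 w20.
have /andP[t0 t1] := ht.
set P1 := n + c / w1; set P2 := n + c / w2.
set w := t * w1 + (1 - t) * w2.
have P10 : 0 < P1 by rewrite /P1 addr_gt0 // divr_gt0.
have P20 : 0 < P2 by rewrite /P2 addr_gt0 // divr_gt0.
have w0 : 0 < w.
  rewrite /w; nra.
set g := t * ln P1 + (1 - t) * ln P2.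
set G := expR g.
have G0 : 0 < G by apply: expR_gt0.
set om := t * ln w1 + (1 - t) * ln w2.
set W := expR om.
have W0 : 0 < W by apply: expR_gt0.
have h1 : n / G <= t * (n / P1) + (1 - t) * (n / P2).
  have := convE t (ln n - ln P1) (ln n - ln P2) ht.
  have -> : t * (ln n - ln P1) + (1 - t) * (ln n - ln P2) = ln n - g by rewrite /g; ring.
  by rewrite !expRB !lnK ?posrE.
have h2 : c / (W * G) <= t * (c / (w1 * P1)) + (1 - t) * (c / (w2 * P2)).
  have := convE t (ln c - (ln w1 + ln P1)) (ln c - (ln w2 + ln P2)) ht.
  have -> : t * (ln c - (ln w1 + ln P1)) + (1 - t) * (ln c - (ln w2 + ln P2))
     = ln c - (om + g) by rewrite /g /om; ring.
  rewrite !expRB !expRD !lnK ?posrE //.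
  by rewrite /W /G /om /g !expRD.
have h3 : W <= w.
  have := convE t (ln w1) (ln w2) ht.
  by rewrite !lnK ?posrE.
have e1 : n / P1 + c / (w1 * P1) = 1.
  by rewrite /P1; field; rewrite !gt_eqF // addr_gt0 // mulr_gt0.
have e2 : n / P2 + c / (w2 * P2) = 1.
  by rewrite /P2; field; rewrite !gt_eqF // addr_gt0 // mulr_gt0.
have h4 : c / (w * G) <= c / (W * G).
  rewrite ler_pM2l // lef_pV2 ?posrE ?mulr_gt0 //.
  by rewrite ler_pM2r.
have e : t * (n / P1) + (1 - t) * (n / P2) + 
    (t * (c / (w1 * P1)) + (1 - t) * (c / (w2 * P2))) = 1.
  transitivity (t * (n / P1 + c / (w1 * P1)) + (1 - t) * (n / P2 + c / (w2 * P2))).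
    by ring.
  by rewrite e1 e2; ring.
have h5 : n / G + c / (w * G) <= 1 by lra.
have -> : n + c / w = (n / G + c / (w * G)) * G.
  by field; rewrite !gt_eqF.
by rewrite -[leRHS]mul1r ler_wpM2r // ltW.
Qed.

Definition Fi {R : realType} {N : nat} (J : nat) (a : 'I_N -> R) (z : 'I_N -> R) (i : 'I_N) : R :=
  if (i < J)%N then N%:R + a i / z i else N%:R + (1 - a i) / (1 - z i).

Lemma core (R : realType) (N J : nat) (m M : R) (a : 'I_N -> R)
    (hm : 0 < m) (hM : M < 1)
    (ha : forall i, m <= a i <= M) (u v : 'I_N -> R) (t : R) :
  in_box m M u -> in_box m M v -> 0 <= t <= 1 ->
  fJ J a (fun i => t * u i + (1 - t) * v i) <= t * fJ J a u + (1 - t) * fJ J a v.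
Proof.
move=> hu hv ht.
have Fpos : forall z, in_box m M z -> forall i, 0 < Fi J a z i.
  move=> z hz i; have N0 : (0 < N)%N by apply: leq_ltn_trans (leq0n i) (ltn_ord i).
  have := hz i; have := ha i; move=> /andP[a1 a2] /andP[z1 z2].
  rewrite /Fi; case: ifP => _; apply: addr_gt0; rewrite ?ltr0n // divr_gt0 //; lra.
have -> : fJ J a u = \prod_(i < N) expR (ln (Fi J a u i)).
  by apply: eq_bigr => i _; rewrite lnK // posrE Fpos.
have -> : fJ J a v = \prod_(i < N) expR (ln (Fi J a v i)).
  by apply: eq_bigr => i _; rewrite lnK // posrE Fpos.
rewrite -!expR_sum.
apply: le_trans (convE _ _ _ ht).
rewrite !mulr_sumr -big_split /= expR_sum.
apply: ler_prod => i _.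
have N0 : (0 < N)%N by apply: leq_ltn_trans (leq0n i) (ltn_ord i).
have := hu i; have := hv i; have := ha i.
move=> /andP[a1 a2] /andP[v1 v2] /andP[u1 u2].
have hz : m <= t * u i + (1 - t) * v i <= M.
  by apply/andP; split; nra.
apply/andP; split.
  rewrite /Fi; case: ifP => _; apply: ltW; apply: addr_gt0; rewrite ?ltr0n // divr_gt0 //; nra.
rewrite /Fi; case: ifP => _.
  by apply: factor_ineq; rewrite ?ltr0n //; lra.
have -> : 1 - (t * u i + (1 - t) * v i) = t * (1 - u i) + (1 - t) * (1 - v i) by ring.
by apply: factor_ineq; rewrite ?ltr0n //; lra.
Qed.

Arguments core {R N} J {m M a} hm hM ha {u v t}.

Theorem lemma2 (R : realType) (N J : nat) (m M : R) (a : 'I_N -> R)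
    (hJ : (J <= N)%N) (hm : 0 < m) (hM : M < 1) (hmM : m <= M)
    (ha : forall i, m <= a i <= M) :
  convex_on (in_box m M) (fJ J a) /\
  (forall (k : nat) (D : ('I_k -> R) -> Prop) (A : ('I_k -> R) -> ('I_N -> R)),
      convex_set D -> affine_map A ->
      (forall x, D x -> in_box m M (A x)) ->
      convex_on D (fun x => fJ J a (A x))).
Proof.
split.
  by move=> x y t hx hy ht; exact: (core J hm hM ha hx hy ht).
move=> k D A hD [c [b hA]] hDA x y t hx hy ht.
have -> : A (fun i => t * x i + (1 - t) * y i) = (fun i => t * A x i + (1 - t) * A y i).
  apply: funext => i.
  rewrite !hA.
  transitivity (t * b i + (1 - t) * b i + (t * \sum_(j < k) c i j * x j + (1 - t) * \sum_(j < k) c i j * y j)).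
    rewrite !mulr_sumr -big_split /=; congr (_ + _); first by ring.
    by apply: eq_bigr => j _; ring.
  by ring.
exact: (core J hm hM ha (hDA _ hx) (hDA _ hy) ht).
Qed.
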